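(* Let $G$ be a connected graph with $n\ge 2$ vertices. Then $$EE(G) > e^{2\cos\left(\frac{\pi}{n+1}\right)} + (n-1) - 2\cos\left(\frac{\pi}{n+1}\right).$$
   Context: All graphs are finite, simple and undirected. For a graph $G$ with adjacency matrix $A(G)$ having eigenvalues $\lambda_1\ge\cdots\ge\lambda_n$, the Estrada index is $EE(G)=\sum_{i=1}^n e^{\lambda_i}$. *)

(* Defs.v *)
From Stdlib Require Import Reals Lra Lia List Relations.
Open Scope R_scope.

(** Square real matrices of size n are functions nat -> nat -> R
    (only entries with indices < n matter). *)

Definition minor0 (M : nat -> nat -> R) (j : nat) : nat -> nat -> R :=
  fun i k => M (S i) (if Nat.ltb k j then k else S k).

Fixpoint det (n : nat) (M : nat -> nat -> R) : R :=
  match n with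
  | O => 1
  | S m => sum_f_R0 (fun j => (-1) ^ j * M O j * det m (minor0 M j)) m
  end.

Definition simple_graph (n : nat) (adj : nat -> nat -> bool) : Prop :=
  (forall i j, (i < n)%nat -> (j < n)%nat -> adj i j = adj j i) /\
  (forall i, (i < n)%nat -> adj i i = false).

Definition edge (n : nat) (adj : nat -> nat -> bool) (i j : nat) : Prop :=
  (i < n)%nat /\ (j < n)%nat /\ adj i j = true.

Definition connected (n : nat) (adj : nat -> nat -> bool) : Prop :=
  forall i j, (i < n)%nat -> (j < n)%nat -> clos_refl_trans nat (edge n adj) i j.

Definition adj_matrix (adj : nat -> nat -> bool) : nat -> nat -> R :=
  fun i j => if adj i j then 1 else 0.

Definition eigenvalues_of (n : nat) (M : nat -> nat -> R) (l : list R) : Prop :=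
  length l = n /\
  forall x : R,
    det n (fun i j => (if Nat.eqb i j then x else 0) - M i j)
    = fold_right Rmult 1 (map (fun lam => x - lam) l).

Definition estrada_of (l : list R) : R := fold_right Rplus 0 (map exp l).

(* Main.v *)
Require Import Defs.
From Stdlib Require Import Reals List Lra Lia Relations Classical.
From mathcomp Require Import all_boot all_algebra.
Import order.Order.TTheory GRing.Theory Num.Theory.
From mathcomp Require Import complex Rstruct sesquilinear spectral.
From mathcomp Require Import zify.
Open Scope R_scope.


Local Open Scope ring_scope.
Local Open Scope sesquilinear_scope.

Definition mxof (n : nat) (M : nat -> nat -> R) : 'M[R]_n :=
  \matrix_(i < n, j < n) M i j.

Lemma sum_f_R0_big (f : nat -> R) m : sum_f_R0 f m = \sum_(i < m.+1) f i.
Proof.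
elim: m => [|m IH] /=; first by rewrite big_ord_recr big_ord0 /= add0r.
by rewrite IH [in RHS]big_ord_recr /=.
Qed.

Lemma det_mxof n M : det n M = \det (mxof n M).
Proof.
elim: n M => [|m IH] M /=; first by rewrite det_mx00.
rewrite sum_f_R0_big (expand_det_row _ ord0); apply: eq_bigr => j _.
rewrite /cofactor IH !mxE /= RmultE RpowE add0n mulrA.
rewrite [M _ _ * _]mulrC; congr (_ * _); congr (\det _); apply/matrixP => i k; rewrite !mxE /= /bump /minor0.
case: (ltnP k j) => h.
  by have -> : Nat.ltb k j = true by apply/Nat.ltb_lt/ssrnat.ltP.
by have -> : Nat.ltb k j = false by apply/Nat.ltb_ge/ssrnat.leP.
Qed.
Lemma poly_eq_ev (F : numDomainType) (p q : {poly F}) : (forall x, p.[x] = q.[x]) -> p = q.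
Proof.
move=> H; apply/eqP; rewrite -subr_eq0; apply/eqP.
pose rs := [seq (i%:R : F) | i <- iota 0 (size (p - q))].
apply: (@roots_geq_poly_eq0 _ _ rs).
- by apply/allP => x _; rewrite /root hornerD hornerN H subrr.
- by rewrite map_inj_uniq ?iota_uniq // => a b /eqP; rewrite eqr_nat => /eqP.
- by rewrite size_map size_iota.
Qed.

Lemma char_poly_ev (F : comNzRingType) n (A : 'M[F]_n) x : (char_poly A).[x] = \det (x%:M - A).
Proof.
rewrite /char_poly -horner_evalE -det_map_mx; congr (\det _).
apply/matrixP => i j; rewrite !mxE /= horner_evalE.
rewrite hornerD hornerN hornerC; case: (i == j); by rewrite /= ?mulr1n ?mulr0n ?hornerX ?horner0.
Qed.

Lemma char_poly_similar (F : numFieldType) n (P B : 'M[F]_n) : P \in unitmx ->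
  char_poly (invmx P *m B *m P) = char_poly B.
Proof.
move=> uP; apply: poly_eq_ev => x; rewrite !char_poly_ev.
have -> : x%:M - invmx P *m B *m P = invmx P *m (x%:M - B) *m P.
  by rewrite mulmxBr mulmxBl mul_mx_scalar -scalemxAl mulVmx // scalemx1.
rewrite !det_mulmx det_inv mulrC mulrA mulrV ?mul1r //.
Qed.

Lemma map_mx_pow (aR rR : comNzRingType) (f : {rmorphism aR -> rR}) n (A : 'M[aR]_n) k :
  map_mx f (A ^+ k) = (map_mx f A) ^+ k.
Proof.
elim: k => [|k IH]; first by rewrite !expr0 map_mx1.
by rewrite !exprS -!mulmxE map_mxM IH.
Qed.

Lemma conj_pow (F : comUnitRingType) n (P B : 'M[F]_n) k : P \in unitmx ->
  (invmx P *m B *m P) ^+ k = invmx P *m B ^+ k *m P.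
Proof.
move=> uP; elim: k => [|k IH].
  by rewrite !expr0 mulmx1 mulVmx.
rewrite !exprS -!mulmxE IH !mulmxA; congr (_ *m _).
by rewrite -!mulmxA; congr (_ *m _); rewrite [P *m _]mulmxA mulmxV // mul1mx.
Qed.

Lemma diag_pow (F : comNzRingType) n (d : 'rV[F]_n) k :
  diag_mx d ^+ k = diag_mx (\row_i (d 0 i ^+ k)).
Proof.
elim: k => [|k IH].
  apply/matrixP => i j; rewrite !mxE expr0; case: (i == j); by rewrite ?mulr1n ?mulr0n.
rewrite exprS -mulmxE IH mul_diag_mx; apply/matrixP => i j; rewrite !mxE.
case: (eqVneq i j) => [->|h]; by rewrite ?mulr1n ?mulr0n ?exprS ?mulr0.
Qed.

Lemma power_sums n (A : 'M[R]_n) (l : seq R) : A^T = A ->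
  char_poly A = \prod_(lam <- l) ('X - lam%:P) ->
  forall k, \sum_(lam <- l) lam ^+ k = \tr (A ^+ k).
Proof.
move=> sym chA k.
pose rc := real_complex R.
pose Ac := map_mx rc A.
have normA : Ac \is normalmx.
  have e : Ac ^t* = Ac.
    apply/matrixP => i j; rewrite !mxE; have -> : A j i = A i j by rewrite -[in RHS]sym mxE.
    by apply: conj_Creal; apply/complex_realP; exists (A i j).
  by rewrite qualifE e.
have /orthomx_spectralP eA := normA.
set P := spectralmx Ac in eA; set D := spectral_diag Ac in eA.
have uP : P \in unitmx by apply: spectral_unit.
have chAc : char_poly Ac = \prod_(z <- map rc l) ('X - z%:P).
  by rewrite -map_char_poly chA map_prod_XsubC big_map.
have chD : char_poly Ac = \prod_(z <- [seq D 0 i | i <- enum 'I_n]) ('X - z%:P).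
  rewrite eA char_poly_similar // char_poly_trig ?diag_mx_is_trig //.
  rewrite big_map big_enum /=; apply: eq_bigr => i _; by rewrite mxE eqxx mulr1n.
have pe := prod_XsubC_eq (etrans (esym chAc) chD).
apply: (fmorph_inj rc).
rewrite rmorph_sum /= -trace_map_mx map_mx_pow -/Ac eA conj_pow //.
rewrite mxtrace_mulC mulmxA mulmxV // mul1mx diag_pow mxtrace_diag.
have -> : \sum_(i <- l) rc (i ^+ k) = \sum_(z <- map rc l) z ^+ k.
  by rewrite big_map; apply: eq_bigr => i _; exact: rmorphXn.
rewrite (perm_big _ pe) big_map big_enum /=.
by apply: eq_bigr => i _; rewrite mxE.
Qed.
Lemma fold_prod (l : list R) x :
  fold_right Rmult 1 (map (fun lam => x - lam) l) = \prod_(lam <- l) (x - lam).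
Proof. by elim: l => [|a l IH] /=; rewrite ?big_nil ?big_cons ?IH. Qed.

Lemma char_poly_l n M (l : list R) : eigenvalues_of n M l ->
  char_poly (mxof n M) = \prod_(lam <- l) ('X - lam%:P).
Proof.
move=> [_ H]; apply: poly_eq_ev => x.
rewrite char_poly_ev horner_prod.
have -> : \prod_(lam <- l) ('X - lam%:P).[x] = \prod_(lam <- l) (x - lam).
  by apply: eq_bigr => lam _; rewrite hornerXsubC.
rewrite -fold_prod -H det_mxof; congr (\det _).
apply/matrixP => i j; rewrite !mxE /=.
case: (Nat.eqb_spec i j) => h.
  by have -> : i == j by apply/eqP/val_inj.
by have -> : (i == j) = false by apply/negbTE/eqP => e; apply: h; rewrite e.
Qed.
Lemma nonneg_pow n (B : 'M[R]_n) : (forall i j, 0 <= B i j) -> forall k i j, 0 <= (B ^+ k) i j.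
Proof.
move=> hB; elim => [|k IH] i j.
  by rewrite expr0 mxE ler0n.
rewrite exprSr -mulmxE mxE; apply: sumr_ge0 => l _; exact: mulr_ge0.
Qed.

Lemma diag_pow_ge n (B : 'M[R]_n) : (forall i j, 0 <= B i j) ->
  forall i k, (B i i) ^+ k <= (B ^+ k) i i.
Proof.
move=> hB i; elim => [|k IH].
  by rewrite !expr0 mxE eqxx mulr1n.
rewrite exprSr [B ^+ k.+1]exprSr -mulmxE mxE (bigD1 i) //=.
apply: (le_trans (ler_wpM2r (hB i i) IH)).
rewrite lerDl; apply: sumr_ge0 => l _; apply: mulr_ge0 => //; exact: nonneg_pow.
Qed.

Lemma tr_ge0 n (B : 'M[R]_n) : (forall i j, 0 <= B i j) -> forall k, 0 <= \tr (B ^+ k).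
Proof. move=> hB k; apply: sumr_ge0 => i _; exact: nonneg_pow. Qed.

Lemma tr_even_ge n (B : 'M[R]_n) : (forall i j, 0 <= B i j) ->
  forall j, \sum_i ((B ^+ 2) i i) ^+ j <= \tr (B ^+ (2 * j)).
Proof.
move=> hB j; rewrite exprM; apply: ler_sum => i _; apply: diag_pow_ge.
exact: nonneg_pow.
Qed.

Lemma sum_ge_n n (d : 'I_n -> R) j : (forall i, 1 <= d i) -> n%:R <= \sum_i (d i) ^+ j.
Proof.
move=> h; apply: (le_trans _ (ler_sum _ (fun i _ => exprn_ege1 j (h i)))).
by rewrite sumr_const card_ord.
Qed.

Lemma sum_ge_n2 n (d : 'I_n -> R) j i0 : (forall i, 1 <= d i) -> 2 <= d i0 ->
  n%:R - 1 + 2 ^+ j <= \sum_i (d i) ^+ j.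
Proof.
move=> h h0.
have -> : \sum_i (d i) ^+ j = \sum_i ((d i) ^+ j - 1) + n%:R.
  by rewrite sumrB sumr_const card_ord subrK.
rewrite (bigD1 i0) //= [X in _ <= X]addrC -[X in X <= _]addrA lerD2l [X in X <= _]addrC -[2 ^+ j - 1]addr0.
apply: lerD; first by apply: lerB => //; apply: lerXn2r => //; rewrite ?nnegrE //; apply: le_trans h0; rewrite ler0n.
apply: sumr_ge0 => i _; rewrite subr_ge0; exact: exprn_ege1.
Qed.
Lemma G1 n adj : (2 <= n)%coq_nat -> connected n adj ->
  forall i, (i < n)%coq_nat -> exists j, (j < n)%coq_nat /\ adj i j = true.
Proof.
move=> hn hc i hi.
pose j0 := if Nat.eqb i 0 then 1%N else 0%N.
have hj0 : (j0 < n)%coq_nat /\ i <> j0.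
  rewrite /j0; case: (Nat.eqb_spec i 0) => h; lia.
have := hc i j0 hi (proj1 hj0).
move=> H0; have H := clos_rt_rt1n _ _ _ _ H0.
have gen : forall a b, clos_refl_trans_1n nat (edge n adj) a b -> a <> b ->
    exists j, (j < n)%coq_nat /\ adj a j = true.
  move=> a b; case => [//|y z [_ [hy e]] _ _]; by exists y.
exact: gen _ _ H (proj2 hj0).
Qed.

Lemma G2 n adj : (3 <= n)%coq_nat -> simple_graph n adj -> connected n adj ->
  exists i j1 j2, (i < n)%coq_nat /\ (j1 < n)%coq_nat /\ (j2 < n)%coq_nat /\ j1 <> j2 /\
     adj i j1 = true /\ adj i j2 = true.
Proof.
move=> hn [hsym _] hc.
apply: NNPP => Hn.
have H : forall i j1 j2, (i < n)%coq_nat -> (j1 < n)%coq_nat -> (j2 < n)%coq_nat ->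
    adj i j1 = true -> adj i j2 = true -> j1 = j2.
  move=> i j1 j2 hi h1 h2 a1 a2; apply: NNPP => ne; apply: Hn.
  by exists i, j1, j2.
have [p [hp ap]] := @G1 n adj (ltac:(lia)) hc 0%N (ltac:(lia)).
have cl : forall x y, clos_refl_trans_1n nat (edge n adj) x y -> (x = 0%N \/ x = p) ->
    (y = 0%N \/ y = p).
  move=> x y; elim => [//|a b c [ha [hb e]] _ IH] hx; apply: IH.
  case: hx => ?; subst a.
    by right; apply: (H 0%N) => //; lia.
  left; apply: (H p) => //; first lia.
  by rewrite hsym //; lia.
pose z := if Nat.eqb p 1 then 2%N else 1%N.
have hz : (z < n)%coq_nat /\ z <> 0%N /\ z <> p.
  rewrite /z; case: (Nat.eqb_spec p 1) => h; lia.
have := cl 0%N z (clos_rt_rt1n _ _ _ _ (hc 0%N z (ltac:(lia)) (proj1 hz))) (or_introl erefl).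
by case: hz => _ [h1 h2] [].
Qed.

Lemma adjA_nonneg n adj : forall i j, 0 <= mxof n (adj_matrix adj) i j.
Proof. move=> i j; rewrite mxE /adj_matrix; case: (adj i j) => //; exact: ler01. Qed.

Lemma adjA_sym n adj : simple_graph n adj -> (mxof n (adj_matrix adj))^T = mxof n (adj_matrix adj).
Proof.
move=> [hs _]; apply/matrixP => i j; rewrite !mxE /adj_matrix hs //; by apply/ssrnat.ltP.
Qed.

Lemma deg_expr n adj (i : 'I_n) :
  (mxof n (adj_matrix adj) ^+ 2) i i = \sum_k mxof n (adj_matrix adj) i k * mxof n (adj_matrix adj) k i.
Proof. by rewrite expr2 -mulmxE mxE. Qed.

Lemma deg_ge1 n adj (i j : 'I_n) : simple_graph n adj -> adj i j = true ->
  1 <= (mxof n (adj_matrix adj) ^+ 2) i i.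
Proof.
move=> [hs _] a; rewrite deg_expr (bigD1 j) //= !mxE /adj_matrix a hs ?a; last 2 first.
- by apply/ssrnat.ltP.
- by apply/ssrnat.ltP.
rewrite mulr1 lerDl; apply: sumr_ge0 => k _; apply: mulr_ge0; exact: adjA_nonneg.
Qed.

Lemma deg_ge2 n adj (i j1 j2 : 'I_n) : simple_graph n adj -> j1 != j2 ->
  adj i j1 = true -> adj i j2 = true ->
  2 <= (mxof n (adj_matrix adj) ^+ 2) i i.
Proof.
move=> [hs _] ne a1 a2; rewrite deg_expr (bigD1 j1) //= (bigD1 j2) /=; last by rewrite eq_sym.
rewrite !mxE /adj_matrix a1 a2 hs ?a1; try by apply/ssrnat.ltP.
rewrite hs ?a2; try by apply/ssrnat.ltP.
rewrite !mulr1 addrA lerDl; apply: sumr_ge0 => k _; apply: mulr_ge0; exact: adjA_nonneg.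
Qed.

Lemma trace_facts n adj : (2 <= n)%coq_nat -> simple_graph n adj -> connected n adj ->
  (forall k, 0 <= \tr (mxof n (adj_matrix adj) ^+ k)) /\
  \tr (mxof n (adj_matrix adj) ^+ 0) = n%:R /\
  (forall j, n%:R <= \tr (mxof n (adj_matrix adj) ^+ (2 * j))) /\
  ((3 <= n)%coq_nat -> forall j, n%:R - 1 + 2 ^+ j <= \tr (mxof n (adj_matrix adj) ^+ (2 * j))).
Proof.
move=> hn hs hc.
have nn := @adjA_nonneg n adj.
have d1 : forall i : 'I_n, 1 <= (mxof n (adj_matrix adj) ^+ 2) i i.
  move=> i; have [j [hj a]] := @G1 n adj hn hc i (ssrnat.ltP (ltn_ord i)).
  exact: (@deg_ge1 n adj i (Ordinal (introT ssrnat.ltP hj))).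
split; first exact: tr_ge0.
split; first by rewrite expr0 mxtrace1.
split.
  move=> j; apply: le_trans (@tr_even_ge _ _ nn j); exact: sum_ge_n.
move=> h3 j; apply: le_trans (@tr_even_ge _ _ nn j).
have [i [j1 [j2 [hi [h1 [h2 [ne [a1 a2]]]]]]]] := @G2 n adj h3 hs hc.
apply: (@sum_ge_n2 n _ j (Ordinal (introT ssrnat.ltP hi))) => //.
apply: (@deg_ge2 n adj _ (Ordinal (introT ssrnat.ltP h1)) (Ordinal (introT ssrnat.ltP h2))) => //.
by apply/eqP => e; apply: ne; have := congr1 val e.
Qed.


Close Scope sesquilinear_scope.
Close Scope ring_scope.
Open Scope R_scope.
From Coquelicot Require Import Coquelicot.

Definition T7 (x : R) := 1 + x + x^2/2 + x^3/6 + x^4/24 + x^5/120 + x^6/720 + x^7/5040.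

Lemma T7_le_exp x : T7 x <= exp x.
Proof.
pose h := fun t => T7 t * exp (- t).
pose h' := fun t => - (t^7 / 5040) * exp (- t).
have D : forall t, derivable_pt_lim h t (h' t).
  move=> t; apply is_derive_Reals; rewrite /h /h' /T7.
  auto_derive; first done. field.
have h0 : h 0 = 1 by rewrite /h /T7 Ropp_0 exp_0; field.
have key : h x <= 1.
  destruct (Rtotal_order x 0) as [hx|[hx|hx]].
  - have [c [e hc]] := MVT_cor2 h h' x 0 hx (fun c _ => D c).
    have : 0 <= h' c * (0 - x).
      rewrite /h'; apply Rmult_le_pos; last lra.
      have : 0 < exp (- c) := exp_pos _.
      have : 0 < (-c)^7 by apply pow_lt; lra.
      replace (c^7) with (-((-c)^7)) by ring.
      nra.
    lra.
  - subst; lra.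
  - have [c [e hc]] := MVT_cor2 h h' 0 x hx (fun c _ => D c).
    have : h' c * (x - 0) <= 0.
      rewrite /h'.
      have : 0 < exp (- c) := exp_pos _.
      have : 0 < c^7 by apply pow_lt; lra.
      move=> h1 h2.
      replace (- (c ^ 7 / 5040) * exp (- c) * (x - 0)) with (-((c^7/5040 * exp (-c)) * x)) by ring.
      have : 0 <= (c^7/5040 * exp (-c)) * x.
        apply Rmult_le_pos; last lra. apply Rmult_le_pos; lra.
      lra.
    lra.
have ex : exp x * exp (- x) = 1.
  by rewrite -exp_plus; replace (x + - x) with 0 by ring; apply exp_0.
have ep := exp_pos x.
rewrite /h in key; nra.
Qed.

Lemma exp_minus_mono c d : 0 <= c -> c <= d -> exp c - c <= exp d - d.
Proof.
move=> h0 h1.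
have e : exp d = exp c * exp (d - c) by rewrite -exp_plus; f_equal; ring.
have h2 := exp_ineq1_le (d - c).
have h3 := exp_ineq1_le c.
rewrite e; nra.
Qed.

Lemma exp_ub y B : 0 < T7 (- y) -> 1 <= B * T7 (- y) -> exp y <= B.
Proof.
move=> h1 h2.
have h3 := T7_le_exp (- y).
have ex : exp y * exp (- y) = 1.
  by rewrite -exp_plus; replace (y + - y) with 0 by ring; apply exp_0.
have := exp_pos y.
nra.
Qed.

Lemma PI_gt3 : 3 < PI.
Proof. have := PI2_3_2; lra. Qed.

Lemma c_bound (N y B : R) : 2 < N -> y = 3 / N -> y <= 1 ->
  0 < T7 (- (2 * (1 - y^2/2 + y^4/24))) ->
  1 <= B * T7 (- (2 * (1 - y^2/2 + y^4/24))) ->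
  exp (2 * cos (PI / N)) - 2 * cos (PI / N) <= B - 2 * (1 - y^2/2 + y^4/24).
Proof.
move=> hN hy hy1 hT hB.
have pi3 := PI_gt3.
have hy0 : 0 < y by rewrite hy; apply Rdiv_lt_0_compat; lra.
have hyle : y < PI / N.
  rewrite hy; apply Rmult_lt_compat_r; [apply Rinv_0_lt_compat; lra | lra].
have hPN : PI / N <= PI / 2.
  apply Rmult_le_compat_l; [lra|]. apply Rinv_le_contravar; lra.
have hPN0 : 0 < PI / N by apply Rdiv_lt_0_compat; lra.
have c1 : cos (PI / N) < cos y by apply cos_decreasing_1; lra.
have c2 : cos y <= 1 - y^2/2 + y^4/24.
  have := proj2 (cos_bound y 0 ltac:(lra) ltac:(lra)).
  rewrite /cos_approx /cos_term /=. lra.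
have c0 : 0 <= cos (PI / N) by apply cos_ge_0; lra.
apply Rle_trans with (exp (2 * (1 - y^2/2 + y^4/24)) - 2 * (1 - y^2/2 + y^4/24)).
  apply exp_minus_mono; lra.
have := exp_ub _ _ hT hB; lra.
Qed.

Definition PS (l : list R) k := fold_right Rplus 0 (map (fun x => x^k) l).

Lemma T7_sum l : fold_right Rplus 0 (map T7 l) =
  PS l 0 + PS l 1 + PS l 2/2 + PS l 3/6 + PS l 4/24 + PS l 5/120 + PS l 6/720 + PS l 7/5040.
Proof.
elim: l => [|a l IH]; rewrite /PS; cbn [map fold_right]; first lra.
rewrite /PS in IH; rewrite IH /T7; field.
Qed.

Lemma estrada_ge l : fold_right Rplus 0 (map T7 l) <= fold_right Rplus 0 (map exp l).
Proof.
elim: l => [|a l IH] /=; first lra.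
have := T7_le_exp a; lra.
Qed.

Lemma final_ineq n (l : list R) : (2 <= n)%coq_nat ->
  PS l 0 = INR n -> (forall k, 0 <= PS l k) -> (forall j, INR n <= PS l (2*j)) ->
  ((3 <= n)%coq_nat -> forall j, INR n - 1 + 2^j <= PS l (2*j)) ->
  fold_right Rplus 0 (map exp l) >
    exp (2 * cos (PI / INR (n + 1))) + (INR n - 1) - 2 * cos (PI / INR (n + 1)).
Proof.
move=> hn h0 hge ha hb.
have E := estrada_ge l; rewrite T7_sum in E.
have p1 := hge 1%nat; have p3 := hge 3%nat; have p5 := hge 5%nat; have p7 := hge 7%nat.
have [hn2|hn3] : n = 2%nat \/ (3 <= n)%coq_nat by lia.
  subst n.
  have a1 : INR 2 <= PS l 2 := ha 1%nat.
  have a2 : INR 2 <= PS l 4 := ha 2%nat.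
  have a3 : INR 2 <= PS l 6 := ha 3%nat.
  simpl in a1, a2, a3, h0.
  replace (INR (2 + 1)) with 3 by (simpl; lra).
  rewrite cos_PI3.
  have := exp_ub 1 2.72 ltac:(rewrite /T7; lra) ltac:(rewrite /T7; lra).
  replace (2 * (1/2)) with 1 by field.
  simpl; lra.
have b1 : INR n - 1 + 2^1 <= PS l 2 := hb hn3 1%nat.
have b2 : INR n - 1 + 2^2 <= PS l 4 := hb hn3 2%nat.
have b3 : INR n - 1 + 2^3 <= PS l 6 := hb hn3 3%nat.
simpl in b1, b2, b3.
suff : exp (2 * cos (PI / INR (n + 1))) - 2 * cos (PI / INR (n + 1)) <
   1 + (INR n + 1) / 2 + (INR n + 3)/24 + (INR n + 7)/720 by lra.
have [h8|hsmall] : (8 <= n)%coq_nat \/ (n = 3 \/ n = 4 \/ n = 5 \/ n = 6 \/ n = 7)%nat by lia.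
  have i8 : 8 <= INR n.
    replace 8 with (INR 8) by (simpl; lra). apply le_INR; lia.
  have c0 : 0 <= cos (PI / INR (n + 1)).
    have pi3 := PI_gt3.
    have hN : 2 < INR (n + 1).
      replace 2 with (INR 2) by (simpl; lra). apply lt_INR; lia.
    have hPN : PI / INR (n + 1) <= PI / 2.
      apply Rmult_le_compat_l; [lra|]. apply Rinv_le_contravar; lra.
    have hPN0 : 0 < PI / INR (n + 1) by apply Rdiv_lt_0_compat; lra.
    apply cos_ge_0; lra.
  have c1 := proj2 (COS_bound (PI / INR (n + 1))).
  have := exp_minus_mono (2 * cos (PI / INR (n + 1))) 2 ltac:(lra) ltac:(lra).
  have := exp_ub 2 7.69 ltac:(rewrite /T7; lra) ltac:(rewrite /T7; lra).
  lra.
case: hsmall => [->|[->|[->|[->|->]]]].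
- have := c_bound (INR (3+1)) (3/4) 4.34 ltac:(simpl; lra) ltac:(simpl; field) ltac:(lra)
     ltac:(rewrite /T7; lra) ltac:(rewrite /T7; lra).
  simpl; lra.
- have := c_bound (INR (4+1)) (3/5) 5.25 ltac:(simpl; lra) ltac:(simpl; field) ltac:(lra)
     ltac:(rewrite /T7; lra) ltac:(rewrite /T7; lra).
  simpl; lra.
- have := c_bound (INR (5+1)) (3/6) 5.85 ltac:(simpl; lra) ltac:(simpl; field) ltac:(lra)
     ltac:(rewrite /T7; lra) ltac:(rewrite /T7; lra).
  simpl; lra.
- have := c_bound (INR (6+1)) (3/7) 6.27 ltac:(simpl; lra) ltac:(simpl; field) ltac:(lra)
     ltac:(rewrite /T7; lra) ltac:(rewrite /T7; lra).
  simpl; lra.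
- have := c_bound (INR (7+1)) (3/8) 6.56 ltac:(simpl; lra) ltac:(simpl; field) ltac:(lra)
     ltac:(rewrite /T7; lra) ltac:(rewrite /T7; lra).
  simpl; lra.
Qed.

Local Open Scope ring_scope.
Lemma PS_big (l : list R) k : PS l k = \sum_(lam <- l) lam ^+ k.
Proof. elim: l => [|a l IH]; rewrite /PS /= ?big_nil ?big_cons // -IH RpowE. by []. Qed.

Lemma two_nat : (2 : R) = 2%:R.
Proof. by rewrite -INRE /=; lra. Qed.


Close Scope ring_scope.
Open Scope R_scope.

Theorem mainTheorem7 (n : nat) (adj : nat -> nat -> bool) (l : list R) :
  (2 <= n)%coq_nat ->
  simple_graph n adj ->
  connected n adj ->
  eigenvalues_of n (adj_matrix adj) l ->
  estrada_of l >
    exp (2 * cos (PI / INR (n + 1))) + (INR n - 1) - 2 * cos (PI / INR (n + 1)).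
Proof.
move=> hn hs hc he.
have chA := @char_poly_l _ _ _ he.
have ps := @power_sums _ _ _ (@adjA_sym _ _ hs) chA.
have [tr0 [tr1 [tr2 tr3]]] := @trace_facts _ _ hn hs hc.
apply: final_ineq => //.
- by rewrite PS_big ps tr1 INRE.
- by move=> k; rewrite PS_big ps; apply/RleP; exact: tr0.
- by move=> j; rewrite PS_big ps INRE; apply/RleP; exact: tr2.
- move=> h3 j; rewrite PS_big ps INRE RminusE RplusE RpowE two_nat; apply/RleP; exact: tr3.
Qed.
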